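(* Let $\mathcal{F}$ be the class of endogenous subgroups models with $k$ components whose component densities belong to an exponential family $\{h(x)\exp(\langle\theta,T(x)\rangle-A(\theta)):\theta\in\Theta\}$. Then $\mathcal{H}=\{x\mapsto\frac{f(1\mid x)}{f(j\mid x)}: j\in[k], f\in\mathcal{F}\}$ satisfies ${\mathrm{Pdim}}(\mathcal{H})\le\dim(T(x))+1$.
   Context: An endogenous subgroups model $f$ with $k$ components has mixing weights $w_1,\dots,w_k$ and component densities $f(x\mid g)$; $f(g\mid x)=\frac{w_gf(x\mid g)}{\sum_{j\in[k]}w_jf(x\mid j)}$. $T(x)$ is the sufficient statistic of the exponential family. ${\mathrm{Pdim}}$ of a real-valued class is the VC dimension of the class of thresholded functions $x\mapsto\mathrm{sgn}(h(x)-r)$, $r\in\mathbb{R}$. *)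

(* Defs.v *)
From HB Require Import structures.
From mathcomp Require Import all_boot all_order all_algebra.
From mathcomp Require Import all_classical all_reals.
From mathcomp Require Import all_analysis.
Set Implicit Arguments. Unset Strict Implicit. Unset Printing Implicit Defensive.
Import Order.TTheory GRing.Theory Num.Theory.
Local Open Scope ring_scope.
Local Open Scope classical_set_scope.

Section Defs.
Variables (R : realType) (X : Type) (d : nat).

Definition inner (th t : 'rV[R]_d) : R := \sum_(i < d) th 0 i * t 0 i.

Definition expfam_density (h : X -> R) (T : X -> 'rV[R]_d) (A : 'rV[R]_d -> R)
  (th : 'rV[R]_d) (x : X) : R := h x * expR (inner th (T x) - A th).

(* An endogenous subgroups model with k components: mixing weights w and
   component parameters th; components densities f(x|g) = expfam_density (th g). *)
Definition is_esm (k : nat) (Theta : set 'rV[R]_d)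
  (w : 'I_k -> R) (th : 'I_k -> 'rV[R]_d) : Prop :=
  (forall g, 0 < w g) /\ \sum_(g < k) w g = 1 /\ (forall g, Theta (th g)).

Definition posterior (h : X -> R) (T : X -> 'rV[R]_d) (A : 'rV[R]_d -> R)
  (k : nat) (w : 'I_k -> R) (th : 'I_k -> 'rV[R]_d) (g : 'I_k) (x : X) : R :=
  w g * expfam_density h T A (th g) x /
    \sum_(j < k) w j * expfam_density h T A (th j) x.

(* H = { x |-> f(1|x) / f(j|x) : j in [k], f in F }; component "1" is the
   first index (ordinal 0) of 'I_k. *)
Definition ratio_class (h : X -> R) (T : X -> 'rV[R]_d) (A : 'rV[R]_d -> R)
  (Theta : set 'rV[R]_d) (k : nat) (hk : (0 < k)%N) : set (X -> R) :=
  [set F | exists (w : 'I_k -> R) (th : 'I_k -> 'rV[R]_d) (j : 'I_k),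
     is_esm Theta w th /\
     F = (fun x => posterior h T A w th (Ordinal hk) x / posterior h T A w th j x)].

End Defs.

Section Pdim.
Variables (R : realType) (X : Type).

(* thresholded class { x |-> sgn(h(x) - r) : h in H, r in R },
   with sgn(t) = + iff t >= 0, encoded as a boolean *)
Definition thresholded (H : set (X -> R)) : set (X -> bool) :=
  [set g | exists F r, H F /\ g = (fun x => r <= F x)].

Definition shatters (G : set (X -> bool)) (n : nat) (pts : 'I_n -> X) : Prop :=
  injective pts /\
  forall b : 'I_n -> bool, exists g, G g /\ forall i, g (pts i) = b i.

Definition VCdim_le (G : set (X -> bool)) (m : nat) : Prop :=
  forall n (pts : 'I_n -> X), shatters G pts -> (n <= m)%N.

Definition Pdim_le (H : set (X -> R)) (m : nat) : Prop :=
  VCdim_le (thresholded H) m.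
End Pdim.

(* Main.v *)
Require Import Defs.
From HB Require Import structures.
From mathcomp Require Import all_boot all_order all_algebra.
From mathcomp Require Import all_classical all_reals.
From mathcomp Require Import all_analysis.
From mathcomp Require Import zify ring.
Import Order.TTheory GRing.Theory Num.Theory.
Local Open Scope ring_scope.
Local Open Scope classical_set_scope.

Lemma kernel_vec (R : realType) (n d : nat) (M : 'M[R]_(n, d)) :
  (d < n)%N -> exists c : 'rV[R]_n, c != 0 /\ c *m M = 0.
Proof.
move=> dn.
have rk : (0 < \rank (kermx M))%N.
  rewrite mxrank_ker; have := rank_leq_col M; lia.
have nz : kermx M != 0 by rewrite -mxrank_eq0 -lt0n.
have [i Hi] : exists i, row i (kermx M) != 0.
  apply/not_existsP => H; move/negP: nz; apply; apply/eqP/row_matrixP => i.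
  rewrite row0; apply/eqP; apply/negPn/negP => Hn; exact: (H i Hn).
exists (row i (kermx M)); split => //; apply/sub_kermxP; exact: row_sub.
Qed.

Lemma vc_affine (R : realType) (X : Type) (d : nat) (T : X -> 'rV[R]_d)
  n (pts : 'I_n -> X) :
  (forall b : 'I_n -> bool, exists (v : 'rV[R]_d) (be : R),
     forall i, (be <= inner v (T (pts i))) = b i) -> (n <= d.+1)%N.
Proof.
move=> Hsh; rewrite leqNgt; apply/negP => dn.
pose L : 'M[R]_(n, d) := \matrix_(i, j) T (pts i) 0 j.
pose M := row_mx L (const_mx 1 : 'M[R]_(n, 1)).
have dn1 : (d + 1 < n)%N by rewrite addn1.
have [c [c0 cM]] := @kernel_vec _ _ _ M dn1.
move: cM; rewrite mul_mx_row => /eqP; rewrite row_mx_eq0 => /andP[/eqP cL /eqP c1].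
have sc : \sum_i c 0 i = 0.
  have Hq := congr1 (fun m : 'M[R]_(1,1) => m 0 0) c1; rewrite /= !mxE in Hq.
  rewrite -[X in _ = X]Hq; apply: eq_bigr => i _; by rewrite mxE mulr1.
have cT : forall j, \sum_i c 0 i * T (pts i) 0 j = 0.
  move=> j; have Hq := congr1 (fun m : 'M[R]_(1,d) => m 0 j) cL; rewrite /= !mxE in Hq.
  rewrite -[X in _ = X]Hq; by apply: eq_bigr => i _; rewrite mxE.
have [v [be Hb]] := Hsh (fun i => c 0 i <= 0).
pose phi i := inner v (T (pts i)) - be.
have s0 : \sum_i c 0 i * phi i = 0.
  rewrite /phi /inner.
  under eq_bigr => i _ do rewrite mulrBr big_distrr /=.
  rewrite sumrB exchange_big /= -big_distrl /= sc mul0r subr0.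
  apply: big1 => j _.
  under eq_bigr => i _ do rewrite mulrCA.
  by rewrite -big_distrr /= cT mulr0.
have tle : forall i, 0 <= - (c 0 i * phi i).
  move=> i; rewrite oppr_ge0; have := Hb i; rewrite /phi.
  case: (lerP (c 0 i) 0) => ci Hi.
    by rewrite mulr_le0_ge0 // subr_ge0 Hi.
  by rewrite pmulr_rle0 // subr_le0 ltW // ltNge Hi.
have s0' : \sum_(i | true) - (c 0 i * phi i) = 0 by rewrite sumrN s0 oppr0.
have z := psumr_eq0P (fun i _ => tle i) s0'.
have cle : forall i, c 0 i <= 0.
  move=> i; have := Hb i; rewrite /phi.
  case: (lerP (c 0 i) 0) => // ci Hi.
  have := z i isT; move/eqP; rewrite oppr_eq0 mulf_eq0 (gt_eqF ci) /= subr_eq0.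
  by move/eqP=> E; move: Hi; rewrite E lexx.
have z2 : forall i, - c 0 i = 0.
  move=> i; apply: (psumr_eq0P (P := predT) (F := fun i => - c 0 i)) => //.
    by move=> j _; rewrite oppr_ge0.
  by rewrite sumrN sc oppr0.
move/negP: c0; apply; apply/eqP/rowP => i; rewrite mxE.
by apply/eqP; rewrite -oppr_eq0 z2.
Qed.

Lemma inner0 (R : realType) d (t : 'rV[R]_d) : inner 0 t = 0.
Proof. by rewrite /inner big1 // => i _; rewrite mxE mul0r. Qed.

Lemma innerB (R : realType) d (a b t : 'rV[R]_d) :
  inner (a - b) t = inner a t - inner b t.
Proof. by rewrite /inner -sumrB; apply: eq_bigr => i _; rewrite !mxE mulrBl. Qed.

Lemma ratio_form (R : realType) (X : Type) (d : nat)
  (h : X -> R) (T : X -> 'rV[R]_d) (A : 'rV[R]_d -> R) (Theta : set 'rV[R]_d)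
  (hpos : forall x, 0 < h x) (k : nat) (hk : (0 < k)%N) F :
  ratio_class h T A Theta hk F ->
  exists C u, 0 < C /\ forall x, F x = C * expR (inner u (T x)).
Proof.
move=> [w [th [j [[wpos [_ _]] ->]]]].
set o := Ordinal hk.
exists (w o / w j * expR (A (th j) - A (th o))), (th o - th j); split.
  by rewrite mulr_gt0 // ?expR_gt0 // divr_gt0.
move=> x; rewrite /posterior /expfam_density.
set S := \sum_(_ < k) _.
have Sp : 0 < S.
  rewrite /S (bigD1 o) //= ltr_pwDl ?mulr_gt0 ?expR_gt0 //.
  by apply: sumr_ge0 => i _; rewrite mulr_ge0 // ltW // mulr_gt0 // expR_gt0.
set a0 := inner (th o) (T x) - A (th o).
set aj := inner (th j) (T x) - A (th j).
have -> : a0 = (A (th j) - A (th o) + inner (th o - th j) (T x)) + aj.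
  by rewrite /a0 /aj innerB; ring.
rewrite !expRD.
have := expR_gt0 (A (th j) - A (th o)); have := expR_gt0 (inner (th o - th j) (T x)).
have := expR_gt0 aj; have := hpos x; have := wpos j; have := wpos o.
move=> p1 p2 p3 p4 p5 p6.
field; rewrite ?gt_eqF //= ?mulr_gt0 ?expR_gt0 //.
Qed.

Theorem lemma3 (R : realType) (X : Type) (d : nat)
  (h : X -> R) (T : X -> 'rV[R]_d) (A : 'rV[R]_d -> R) (Theta : set 'rV[R]_d)
  (hpos : forall x, 0 < h x)
  (k : nat) (hk : (0 < k)%N) :
  Pdim_le (ratio_class h T A Theta hk) d.+1.
Proof.
move=> n pts [_ Hsh]; apply: (@vc_affine R X d T n pts) => b.
have [g [[F [r [HF ->]]] Hg]] := Hsh b.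
have [C [u [Cp FE]]] := @ratio_form R X d h T A Theta hpos k hk F HF.
case: (lerP r 0) => r0.
  exists 0, 0 => i; rewrite -Hg inner0 lexx FE.
  by apply/esym; apply: le_trans r0 _; rewrite ltW // mulr_gt0 // expR_gt0.
exists u, (ln (r / C)) => i; rewrite -Hg FE.
rewrite -ler_expR lnK; last by rewrite posrE divr_gt0.
by rewrite ler_pdivrMr // mulrC.
Qed.
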